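(* Let $A$ be a strongly indecomposable torsion-free Abelian group of finite rank with $A=\mathrm{PSoc}\,A$. Then $\mathrm{End}\,A$ is centrally essential if and only if $\mathrm{End}\,A$ is commutative.
   Context: All rings are associative with non-zero identity. A ring $R$ is centrally essential if for every non-zero $a\in R$ there exist non-zero elements $x,y$ of the center of $R$ with $ax=y$. For torsion-free Abelian groups $B,D$, $B\doteq D$ means $nB\subseteq D$ and $mD\subseteq B$ for some positive integers $n,m$; a torsion-free group $A$ is strongly indecomposable if it has no quasi-decomposition $A\doteq B\oplus D$ with $B,D$ non-zero. The pseudo-socle $\mathrm{PSoc}\,A$ is the pure subgroup of $A$ generated by all minimal non-zero pure fully invariant subgroups of $A$. *)

(* Defs.v *)
From HB Require Import structures.
From mathcomp Require Import all_boot all_order all_algebra.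
Set Implicit Arguments. Unset Strict Implicit. Unset Printing Implicit Defensive.
Import GRing.Theory.
Local Open Scope ring_scope.

(* Abelian groups are zmodTypes; subgroups are Prop-valued predicates;
   End A is the set of additive maps {additive A -> A} with composition. *)

Definition torsion_free (A : zmodType) : Prop :=
  forall (n : nat) (x : A), (0 < n)%N -> x *+ n = 0 -> x = 0.

Definition finite_rank (A : zmodType) : Prop :=
  exists s : seq A, forall x : A, exists n : nat, (0 < n)%N /\
    exists c : 'I_(size s) -> int, x *+ n = \sum_(i < size s) s`_i *~ c i.

Definition subgroup (A : zmodType) (B : A -> Prop) : Prop :=
  B 0 /\ (forall x y, B x -> B y -> B (x - y)).

Definition nonzero_sub (A : zmodType) (B : A -> Prop) : Prop :=
  exists x, B x /\ x != 0.

(* B is pure in A: nB = B ∩ nA for all n *)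
Definition pure (A : zmodType) (B : A -> Prop) : Prop :=
  subgroup B /\ forall (n : nat) (x : A), B (x *+ n) ->
    exists b, B b /\ x *+ n = b *+ n.

Definition fully_invariant (A : zmodType) (B : A -> Prop) : Prop :=
  subgroup B /\ forall (f : {additive A -> A}) x, B x -> B (f x).

Definition min_pure_fi (A : zmodType) (B : A -> Prop) : Prop :=
  pure B /\ fully_invariant B /\ nonzero_sub B /\
  forall C : A -> Prop, pure C -> fully_invariant C -> nonzero_sub C ->
    (forall x, C x -> B x) -> forall x, B x -> C x.

(* pseudo-socle: the pure subgroup generated by all minimal non-zero pure
   fully invariant subgroups (smallest pure subgroup containing them) *)
Definition PSoc (A : zmodType) : A -> Prop :=
  fun x => forall C : A -> Prop, pure C ->
    (forall B : A -> Prop, min_pure_fi B -> forall y, B y -> C y) -> C x.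

Definition quasi_decomposable (A : zmodType) : Prop :=
  exists B D : A -> Prop, subgroup B /\ subgroup D /\
    nonzero_sub B /\ nonzero_sub D /\
    (forall x, B x -> D x -> x = 0) /\
    exists n : nat, (0 < n)%N /\
      forall x : A, exists b d, B b /\ D d /\ x *+ n = b + d.

Definition strongly_indecomposable (A : zmodType) : Prop :=
  ~ quasi_decomposable A.

Definition end_nonzero (A : zmodType) (f : {additive A -> A}) : Prop :=
  exists x, f x != 0.

Definition end_central (A : zmodType) (f : {additive A -> A}) : Prop :=
  forall g : {additive A -> A}, f \o g =1 g \o f.

Definition End_commutative (A : zmodType) : Prop :=
  forall f g : {additive A -> A}, f \o g =1 g \o f.

Definition End_centrally_essential (A : zmodType) : Prop :=
  forall a : {additive A -> A}, end_nonzero a ->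
    exists x y : {additive A -> A}, end_central x /\ end_central y /\
      end_nonzero x /\ end_nonzero y /\ a \o x =1 y.

(* Main.v *)
From HB Require Import structures.
Require Import Defs.
From mathcomp Require Import all_boot all_order all_algebra.
From mathcomp Require Import ring zify.
From Stdlib Require Import Classical ClassicalEpsilon.
Set Implicit Arguments. Unset Strict Implicit. Unset Printing Implicit Defensive.
Import GRing.Theory Num.Theory.
Local Open Scope ring_scope.

Section PE.
Variable A : zmodType.
Variable x : {additive A -> A}.

Lemma iterB n (u w : A) : iter n x (u - w) = iter n x u - iter n x w.
Proof. by elim: n => //= n ->; rewrite raddfB. Qed.

Lemma iter0 n : iter n x 0 = 0.
Proof. by elim: n => //= n ->; rewrite raddf0. Qed.

Lemma iterx n (u : A) : iter n x (x u) = x (iter n x u).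
Proof. by rewrite -iterSr. Qed.

Definition pe (p : {poly int}) (v : A) : A := \sum_(i < size p) iter i x v *~ p`_i.

Lemma pe_wide n (p : {poly int}) v : (size p <= n)%N -> pe p v = \sum_(i < n) iter i x v *~ p`_i.
Proof.
move=> Hn; rewrite /pe (big_ord_widen n (fun i => iter i x v *~ p`_i)) //.
rewrite big_mkcond /=; apply: eq_bigr => i _; case: ifP => // /negbT.
by rewrite -leqNgt => H; rewrite nth_default // mulrz0.
Qed.

Lemma pe_morph p : zmod_morphism (pe p).
Proof.
move=> u w; rewrite /pe -sumrB; apply: eq_bigr => i _.
by rewrite iterB mulrzBl.
Qed.

End PE.

HB.instance Definition _ (A : zmodType) (x : {additive A -> A}) (p : {poly int}) :=
  GRing.isZmodMorphism.Build A A (pe x p) (pe_morph x p).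

Section PE2.
Variable A : zmodType.
Variable x : {additive A -> A}.

Lemma pe0v p : pe x p 0 = 0. Proof. exact: raddf0. Qed.

Lemma pe_add p q v : pe x (p + q) v = pe x p v + pe x q v.
Proof.
rewrite !(@pe_wide _ _ (maxn (size p) (size q))) ?size_polyD ?leq_maxl ?leq_maxr //.
by rewrite -big_split; apply: eq_bigr => i _; rewrite coefD mulrzDr.
Qed.

Lemma pe_C c v : pe x c%:P v = v *~ c.
Proof.
rewrite (@pe_wide _ _ 1) ?size_polyC ?leq_b1 // big_ord1 coefC /=.
by [].
Qed.

Lemma pe_MX p v : pe x (p * 'X) v = pe x p (x v).
Proof.
rewrite (@pe_wide _ _ (size p).+1); last first.
  have := size_polyMleq p 'X; rewrite size_polyX addn2 /=.
  by move/leq_trans; apply; rewrite leqnn.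
rewrite big_ord_recl coefMX /= mulr0z add0r /pe; apply: eq_bigr => i _.
by rewrite coefMX /= -iterSr.
Qed.

Lemma pe_CM c p v : pe x (c%:P * p) v = pe x p v *~ c.
Proof.
rewrite (@pe_wide _ _ (size p)); last by rewrite mul_polyC size_scale_leq.
rewrite /pe mulrz_suml; apply: eq_bigr => i _.
by rewrite coefCM mulrC mulrzA.
Qed.

Lemma pe_xcomm p v : x (pe x p v) = pe x p (x v).
Proof.
rewrite /pe raddf_sum; apply: eq_bigr => i _.
by rewrite raddfMz iterx.
Qed.

Lemma pe_mul p q v : pe x (p * q) v = pe x p (pe x q v).
Proof.
elim/poly_ind: p v => [|p c IH] v.
  by rewrite mul0r /pe size_poly0 !big_ord0.
rewrite mulrDl mulrAC pe_add pe_MX IH pe_CM pe_add pe_MX pe_C.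
by rewrite pe_xcomm.
Qed.

Lemma pe_Xn m v : pe x 'X^m v = iter m x v.
Proof.
elim: m v => [|m IH] v; first by rewrite expr0 -polyC1 pe_C mulr1z.
by rewrite exprSr pe_MX IH -iterSr.
Qed.

End PE2.

Lemma RAT (N k : nat) (W : 'M[rat]_(N, k)) : (k < N)%N ->
  exists c : 'I_N -> int, (exists j, c j != 0) /\
    forall i, \sum_j (c j)%:~R * W j i = 0.
Proof.
move=> Hk.
have nf : ~~ row_free W.
  apply/negP => /eqP H; have := rank_leq_col W; rewrite H.
  by rewrite leqNgt Hk.
have : kermx W != 0 by rewrite kermx_eq0.
case/matrix0Pn => j0 [l0 Hne].
pose u l := kermx W j0 l.
have Hu i : \sum_l u l * W l i = 0.
  have := congr1 (fun M : 'M[rat]_(N, k) => M j0 i) (mulmx_ker W).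
  by rewrite !mxE.
pose D l := \prod_(l' < N | l' != l) denq (u l').
exists (fun l => numq (u l) * D l); split.
  exists l0; rewrite mulf_neq0 // ?numq_eq0 //.
  by apply/prodf_neq0 => l' _; rewrite denq_neq0.
move=> i.
have E l : (numq (u l) * D l)%:~R = u l * (\prod_(l' < N) denq (u l'))%:~R :> rat.
  by rewrite intrM numqE (bigD1 l) //= intrM mulrA.
under eq_bigr => l _ do rewrite E mulrAC.
by rewrite -mulr_suml Hu mul0r.
Qed.

Lemma DEP (A : zmodType) (s : seq A) (N : nat) (y : 'I_N -> A) :
  torsion_free A -> (size s < N)%N ->
  (forall z : A, exists n : nat, (0 < n)%N /\
    exists c : 'I_(size s) -> int, z *+ n = \sum_(i < size s) s`_i *~ c i) ->
  exists c : 'I_N -> int, (exists j, c j != 0) /\ \sum_(j < N) y j *~ c j = 0.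
Proof.
move=> TF Hk Hfr.
have F z : {nc : nat * ('I_(size s) -> int) | (0 < nc.1)%N /\
     z *+ nc.1 = \sum_(i < size s) s`_i *~ nc.2 i}.
  apply: constructive_indefinite_description.
  by case: (Hfr z) => n [n0 [c e]]; exists (n, c).
pose n j := (sval (F (y j))).1; pose d j := (sval (F (y j))).2.
have Hn j : (0 < n j)%N /\ y j *+ n j = \sum_(i < size s) s`_i *~ d j i.
  exact: (svalP (F (y j))).
pose m j := (\prod_(l < N | l != j) n l)%N.
pose L := (\prod_(l < N) n l)%N.
have HL j : L = (n j * m j)%N by rewrite /L (bigD1 j).
pose W := \matrix_(j < N, i < size s) ((d j i * (m j)%:Z)%:~R : rat).
have [c [[j0 Hj0] Hc]] := RAT W Hk.
exists c; split; first by exists j0.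
apply: (TF L); first by apply: prodn_gt0 => l; case: (Hn l).
rewrite -sumrMnl.
have E j : y j *~ c j *+ L = \sum_(i < size s) s`_i *~ (d j i * ((m j)%:Z * c j)).
  rewrite pmulrn -mulrzA (mulrC (c j)) mulrzA -pmulrn (HL j) mulrnA.
  case: (Hn j) => _ ->; rewrite pmulrn -mulrzA mulrz_suml.
  by apply: eq_bigr => i _; rewrite -!mulrzA.
under eq_bigr => j _ do rewrite E.
rewrite exchange_big /=; apply: big1 => i _.
rewrite -mulrz_sumr.
suff -> : \sum_(j < N) d j i * ((m j)%:Z * c j) = 0 by rewrite mulr0z.
apply: (@intr_inj rat); rewrite mulr0z.
rewrite -(Hc i) rmorph_sum; apply: eq_bigr => j _.
by rewrite mxE !rmorphM /= mulrA mulrC.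
Qed.

Section Sub.
Variable A : zmodType.

Lemma sub_opp (B : A -> Prop) v : subgroup B -> B v -> B (- v).
Proof. by case=> H0 HB Hv; rewrite -sub0r; apply: HB. Qed.

Lemma sub_add (B : A -> Prop) u v : subgroup B -> B u -> B v -> B (u + v).
Proof.
move=> SB Hu Hv; rewrite -(opprK v); case: (SB) => _ HB; apply: HB => //.
by apply: sub_opp.
Qed.

Lemma sub_muln (B : A -> Prop) v n : subgroup B -> B v -> B (v *+ n).
Proof.
move=> SB Hv; elim: n => [|n IH]; first by rewrite mulr0n; case: SB.
by rewrite mulrS; apply: sub_add.
Qed.

Lemma pure_of (C : A -> Prop) : subgroup C ->
  (forall n v, (0 < n)%N -> C (v *+ n) -> C v) -> pure C.
Proof.
move=> SC H; split=> // n v Hv; case: n Hv => [|n] Hv.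
  by exists 0; rewrite !mulr0n; split=> //; case: SC.
by exists v; split=> //; apply: (H n.+1).
Qed.

Lemma pure_div (B : A -> Prop) n v : torsion_free A -> pure B -> (0 < n)%N ->
  B (v *+ n) -> B v.
Proof.
move=> TF [SB PB] n0 /PB [c [Bc E]].
have -> : v = c; last by [].
apply/eqP; rewrite -subr_eq0; apply/eqP; apply: (TF n) => //.
by rewrite mulrnBl E subrr.
Qed.

Lemma ker_sub (f : {additive A -> A}) : subgroup (fun v => f v = 0).
Proof.
split; first exact: raddf0.
by move=> u w Hu Hw; rewrite raddfB Hu Hw subrr.
Qed.

End Sub.

Lemma central_comm (A : zmodType) (x g : {additive A -> A}) v :
  end_central x -> x (g v) = g (x v).
Proof. by move=> H; apply: H. Qed.

Lemma PX (A : zmodType) (x : {additive A -> A}) :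
  torsion_free A -> (forall v : A, PSoc v) -> end_central x ->
  forall v, exists n, (0 < n)%N /\ exists w, x v *+ n = x (x w).
Proof.
move=> TF HPS Cx v.
pose C := fun v => exists n, (0 < n)%N /\ exists w, x v *+ n = x (x w).
have SC : subgroup C.
  split; first by exists 1%N; split=> //; exists 0; rewrite !raddf0.
  move=> u w [n1 [n10 [w1 E1]]] [n2 [n20 [w2 E2]]].
  exists (n1 * n2)%N; split; first by rewrite muln_gt0 n10.
  exists (w1 *+ n2 - w2 *+ n1).
  rewrite [x (u - w)]raddfB mulrnBl mulrnA E1 mulnC mulrnA E2 !raddfB !raddfMn.
  by [].
apply: (HPS v C).
  apply: pure_of => // n u n0 [n' [n'0 [w E]]].
  exists (n * n')%N; split; first by rewrite muln_gt0 n0.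
  by exists w; rewrite -E raddfMn mulrnA.
move=> B [PB [[SB FB] [NB MB]]] b Bb.
case: (classic (exists b0, B b0 /\ x b0 != 0)) => [[b0 [Bb0 xb0]]|Hno]; last first.
  rewrite /C; have -> : x b = 0.
    apply/eqP; apply: contraT => H; case: Hno; by exists b.
  by exists 1%N; split=> //; exists 0; rewrite !raddf0.
pose B1 := fun u => exists n, (0 < n)%N /\ exists b', B b' /\ u *+ n = x b'.
have SB1 : subgroup B1.
  split; first by exists 1%N; split=> //; exists 0; rewrite raddf0; split; case: SB.
  move=> u w [n1 [n10 [w1 [B1w E1]]]] [n2 [n20 [w2 [B2w E2]]]].
  exists (n1 * n2)%N; split; first by rewrite muln_gt0 n10.
  exists (w1 *+ n2 - w2 *+ n1); split.
    by case: (SB) => _ HB; apply: HB; apply: sub_muln.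
  by rewrite mulrnBl mulrnA E1 mulnC mulrnA E2 !raddfB !raddfMn.
have PB1 : pure B1.
  apply: pure_of => // n u n0 [n' [n'0 [w [Bw E]]]].
  exists (n * n')%N; split; first by rewrite muln_gt0 n0.
  by exists w; rewrite mulrnA.
have FB1 : fully_invariant B1.
  split=> // f u [n [n0 [w [Bw E]]]].
  exists n; split=> //; exists (f w); split; first exact: FB.
  by rewrite -raddfMn E central_comm.
have NB1 : nonzero_sub B1.
  by exists (x b0); split=> //; exists 1%N; split=> //; exists b0.
have B1B : forall u, B1 u -> B u.
  move=> u [n [n0 [w [Bw E]]]]; apply: (pure_div TF PB n0).
  by rewrite E; apply: FB.
have HB1 := MB B1 PB1 FB1 NB1 B1B.
have [n [n0 [b1 [Bb1 E1]]]] := HB1 b Bb.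
have [n' [n'0 [b2 [Bb2 E2]]]] := HB1 b1 Bb1.
exists (n * n')%N; split; first by rewrite muln_gt0 n0.
exists (x b2).
by rewrite -raddfMn mulrnA E1 -raddfMn E2.
Qed.

Lemma PXj (A : zmodType) (x : {additive A -> A}) :
  (forall v, exists n, (0 < n)%N /\ exists w, x v *+ n = x (x w)) ->
  forall j v, exists n, (0 < n)%N /\ exists w, x v *+ n = iter j.+1 x w.
Proof.
move=> HP; elim=> [|j IH] v; first by exists 1%N; split=> //; exists v.
have [n [n0 [w E]]] := IH v.
have [n' [n'0 [w' E']]] := HP w.
exists (n * n')%N; split; first by rewrite muln_gt0 n0.
exists w'; rewrite mulrnA E.
have H k u m : iter k x (u *+ m) = iter k x u *+ m.
  by elim: k => //= k ->; rewrite raddfMn.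
by rewrite iterSr -H E' -iterSr -iterSr.
Qed.

Lemma killv (A : zmodType) (x : {additive A -> A}) (s : seq A) :
  torsion_free A ->
  (forall z : A, exists n : nat, (0 < n)%N /\
    exists c : 'I_(size s) -> int, z *+ n = \sum_(i < size s) s`_i *~ c i) ->
  forall v, exists p : {poly int}, p != 0 /\ pe x p v = 0.
Proof.
move=> TF Hfr v.
have [c [[j0 Hj0] Hc]] := @DEP A s (size s).+1 (fun j => iter j x v) TF (ltnSn _) Hfr.
exists (\poly_(j < (size s).+1) c (inord j)); split.
  apply/eqP => H; have := congr1 (fun q : {poly int} => q`_j0) H.
  by rewrite coef_poly ltn_ord inord_val coef0 => /eqP; apply/negP.
rewrite (@pe_wide _ _ (size s).+1) ?size_poly // -[X in _ = X]Hc.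
by apply: eq_bigr => j _; rewrite coef_poly ltn_ord inord_val.
Qed.

Lemma killall (A : zmodType) (x : {additive A -> A}) :
  torsion_free A -> finite_rank A ->
  exists p : {poly int}, p != 0 /\ forall v, pe x p v = 0.
Proof.
move=> TF [s Hfr].
have Hl : forall l : seq A, exists p : {poly int}, p != 0 /\
    forall z, z \in l -> pe x p z = 0.
  elim=> [|y l [pl [pl0 Hpl]]]; first by exists 1; split=> //; rewrite oner_eq0.
  have [py [py0 Hpy]] := killv x TF Hfr y.
  exists (py * pl); split; first by rewrite mulf_neq0.
  move=> z; rewrite inE => /orP [/eqP ->|zl].
    by rewrite mulrC pe_mul Hpy raddf0.
  by rewrite pe_mul Hpl // raddf0.
have [p [p0 Hp]] := Hl s.
exists p; split=> // v.
have [n [n0 [c E]]] := Hfr v.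
apply: (TF n) => //.
rewrite -raddfMn E raddf_sum big1 // => i _.
have H0 : pe x p s`_i = 0 by apply: Hp; exact: mem_nth.
by rewrite raddfMz; move: H0 => /= ->; rewrite mul0rz.
Qed.

Lemma central_inj (A : zmodType) :
  torsion_free A -> finite_rank A -> strongly_indecomposable A ->
  (forall x : A, PSoc x) ->
  forall x : {additive A -> A}, end_central x -> end_nonzero x ->
  forall v, x v = 0 -> v = 0.
Proof.
move=> TF FR SI HPS x Cx NX.
have HP := PX TF HPS Cx.
have HPj := PXj HP.
have [p [p0 Hp]] := killall x TF FR.
have ex : exists a, p`_a != 0.
  by exists (size p).-1; rewrite -lead_coefE lead_coef_eq0.
case: (ex_minnP ex) => a Ha Hmin.
pose q := drop_poly a p.
have Ep : p = q * 'X^a.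
  rewrite -{1}(poly_take_drop a p); suff -> : take_poly a p = 0 by rewrite add0r.
  apply/polyP => i; rewrite coef_take_poly coef0; case: ifP => // ia.
  apply/eqP; apply: contraT => H; have := Hmin i H; by rewrite leqNgt ia.
pose c := q`_0.
have c0 : c != 0 by rewrite /c coef_drop_poly add0n.
pose r := drop_poly 1 q.
have Eq : q = c%:P + r * 'X.
  rewrite -{1}(poly_take_drop 1 q) expr1; congr (_ + _).
  by apply/polyP => i; rewrite coef_take_poly coefC; case: i.
pose k := a.+1; pose m := (2 * k)%N.
pose Wp := \sum_(i < m) (c%:P) ^+ (m.-1 - i) * (- (r * 'X)) ^+ i.
have Eid : (c ^+ m)%:P = r ^+ m * 'X^m + Wp * q.
  have H := subrXX (c%:P) (- (r * 'X)) m.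
  rewrite opprK -Eq -/Wp in H.
  rewrite rmorphXn /= -[c%:P ^+ m](subrK ((- (r * 'X)) ^+ m)) H.
  rewrite /m !exprM sqrrN -!exprM exprMn mulrC.
  by rewrite addrC mulrC.
pose N := absz (c ^+ m).
have Nz : (N%:Z) = c ^+ m.
  rewrite /N gez0_abs // /m exprM; apply: exprn_ge0; exact: sqr_ge0.
have N0 : (0 < N)%N by rewrite absz_gt0 expf_neq0.
have killp t v : pe x (t * p) v = 0 by rewrite pe_mul Hp raddf0.
have am : (a <= m)%N by rewrite /m /k; lia.
have EX : 'X^m = 'X^a * 'X^(m - a) :> {poly int} by rewrite -exprD subnKC.
have I1 v : pe x q (pe x 'X^m v) = 0.
  rewrite -pe_mul.
  have -> : q * 'X^m = 'X^(m - a) * p by rewrite Ep EX mulrA mulrC.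
  exact: killp.
have I3 v : pe x q (pe x (r ^+ m) (pe x 'X^m v)) = 0.
  rewrite -!pe_mul.
  have -> : q * r ^+ m * 'X^m = (r ^+ m * 'X^(m - a)) * p.
    rewrite Ep EX; move: (r ^+ m) ('X^a) ('X^(m - a)) => R Z Y; ring.
  exact: killp.
have I4 v : pe x 'X^m (pe x Wp (pe x q v)) = 0.
  rewrite -!pe_mul.
  have -> : 'X^m * Wp * q = (Wp * 'X^(m - a)) * p.
    rewrite Ep EX; move: ('X^a) ('X^(m - a)) => Z Y; ring.
  exact: killp.
have I2 v : v *+ N = pe x (r ^+ m) (pe x 'X^m v) + pe x Wp (pe x q v).
  by rewrite pmulrn Nz -(pe_C x) Eid pe_add !pe_mul.
pose B := fun v => pe x 'X^m v = 0.
pose D := fun v => pe x q v = 0.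
have SB : subgroup B by apply: (ker_sub (pe x 'X^m)).
have SD : subgroup D by apply: (ker_sub (pe x q)).
case: (classic (nonzero_sub D)) => ND; last first.
  exfalso; case: NX => v0 Hv0.
  have Xm0 w : pe x 'X^m w = 0.
    apply/eqP; apply: contraT => H; case: ND; exists (pe x 'X^m w); split=> //.
  have [n [n0 [w E]]] := HPj m v0.
  move: E; rewrite iterS -pe_Xn Xm0 raddf0 => E.
  by move: Hv0; rewrite (TF n _ n0 E) eqxx.
case: (classic (nonzero_sub B)) => NB.
  exfalso; apply: SI; exists B, D; do 4 (split=> //).
  split.
    move=> u Bu Du; apply: (TF N) => //; rewrite I2.
    by move: Bu Du; rewrite /B /D => -> ->; rewrite !raddf0 addr0.
  exists N; split=> // v.
  exists (pe x Wp (pe x q v)), (pe x (r ^+ m) (pe x 'X^m v)).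
  split; first exact: I4.
  split; first exact: I3.
  by rewrite I2 addrC.
move=> v xv; apply/eqP; apply: contraT => vn0; case: NB; exists v; split=> //.
rewrite /B pe_Xn.
have -> : m = m.-1.+1 by rewrite /m /k; lia.
by rewrite iterSr xv iter0.
Qed.

Theorem proposition3p3 (A : zmodType) :
  torsion_free A -> finite_rank A -> strongly_indecomposable A ->
  (forall x : A, PSoc x) ->
  (End_centrally_essential A <-> End_commutative A).
Proof.
move=> TF FR SI HPS; split.
  move=> CE f g v.
  case: (classic (end_nonzero f)) => Nf; last first.
    have f0 w : f w = 0.
      apply/eqP; apply: contraT => H; case: Nf; by exists w.
    by rewrite /= !f0 raddf0.
  have [x [y [Cx [Cy [Nx [Ny Exy]]]]]] := CE f Nf.
  have Hcx w : f (g (x w)) = g (f (x w)).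
    have E1 : f (x w) = y w by apply: Exy.
    have E2 : f (x (g w)) = y (g w) by apply: Exy.
    have C1 : x (g w) = g (x w) by apply: Cx.
    have C2 : y (g w) = g (y w) by apply: Cy.
    by rewrite -C1 E2 E1 C2.
  apply/eqP; rewrite -subr_eq0; apply/eqP.
  apply: (central_inj TF FR SI HPS Cx Nx).
  rewrite raddfB /=.
  have := Cx f (g v); have := Cx g (f v); rewrite /= => -> ->.
  have := Cx g v; rewrite /= => ->.
  have := Cx f v; rewrite /= => ->.
  by rewrite Hcx subrr.
move=> Com a [v Hv].
exists idfun, a; split; first by move=> g w.
split; first by move=> g w; apply: Com.
split; first by exists v; apply: contraNneq Hv => /= ->; rewrite raddf0.
by split; [exists v | move=> w].
Qed.
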